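(* Let $k\geq1$ and $0\leq s,t\leq k-1$, with $\lambda^{\pm}_{s,t}\neq 3$ for the sign considered. Then $u^{\pm}_{s,t}\equiv 0$ on $P(k)$ if and only if $u^{\pm}_{s,t}$ is one of: $u^{+}_{s,k-s}$ or $u^{+}_{k-s,s}$ for $1\leq s<k/3$; $u^{-}_{s,k-s}$ for $k/3<s<2k/3$; $u^{+}_{s,2s}$ or $u^{+}_{2s,s}$ for $0\leq s<k/3$; $u^{-}_{s,2s}$ or $u^{-}_{2s,s}$ for $k/3<s<k/2$; $u^{-}_{s,2s-k}$ or $u^{-}_{2s-k,s}$ for $k/2\leq s<2k/3$; $u^{+}_{s,2s-k}$ or $u^{+}_{2s-k,s}$ for $2k/3<s\leq k-1$. Moreover, $w^{\pm}_{s,t}\equiv0$ on $P(k)$ if and only if $w^{\pm}_{s,t}$ is one of: $w^{\pm}_{s,0}$ or $w^{\pm}_{0,t}$ for $0\leq s,t\leq k-1$; $w^{\pm}_{s,s}$ for $0\leq s\leq k-1$; $w^{+}_{s,k-s}$ or $w^{+}_{k-s,s}$ for $1\leq s<k/3$; $w^{-}_{s,k-s}$ for $k/3<s<2k/3$; $w^{+}_{s,2s}$ or $w^{+}_{2s,s}$ for $0\leq s<k/3$; $w^{-}_{s,2s}$ or $w^{-}_{2s,s}$ for $k/3<s<k/2$; $w^{-}_{s,2s-k}$ or $w^{-}_{2s-k,s}$ for $k/2\leq s<2k/3$; $w^{+}_{s,2s-k}$ or $w^{+}_{2s-k,s}$ for $2k/3<s\leq k-1$.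
   Context: Let $\omega=e^{\pi i/3}$, $\mathrm{M}=(1+\omega)/3$, and $P(k)=\{a+b\omega:0\leq a,b\leq k-1\}\cup\{\mathrm{M}+a+b\omega:0\leq a,b\leq k-1\}$, with $a,b$ read modulo $k$. The hexagonal torus $T(k)$ has vertex set $P(k)$, each $a+b\omega$ being adjacent to $\mathrm{M}+a+b\omega$, $\mathrm{M}+(a-1)+b\omega$ and $\mathrm{M}+a+(b-1)\omega$ (indices mod $k$). For $0\leq s,t\leq k-1$ put $$\lambda^{\pm}_{s,t}=3\pm\sqrt{3+2\cos\tfrac{2\pi s}{k}+2\cos\tfrac{2\pi t}{k}+2\cos\tfrac{2\pi(s-t)}{k}},$$ and, when $\lambda^{\pm}_{s,t}\neq3$, define $v^{\pm}_{s,t}\colon P(k)\to\mathbb{C}$ by $v^{\pm}_{s,t}(a+b\omega)=e^{2\pi i(sa+tb)/k}$ and $v^{\pm}_{s,t}(\mathrm{M}+a+b\omega)=\frac{1}{3-\lambda^{\pm}_{s,t}}\,e^{2\pi i(sa+tb)/k}(1+e^{2\pi is/k}+e^{2\pi it/k})$; these are Laplacian eigenfunctions of $T(k)$ with eigenvalue $\lambda^{\pm}_{s,t}$. Let $D_6$ be the group of automorphisms of $T(k)$ generated by (indices mod $k$) the rotation $a+b\omega\mapsto (k-a-b-1)+a\omega$, $\mathrm{M}+a+b\omega\mapsto\mathrm{M}+(k-a-b-2)+a\omega$; the reflection $\rho_1$: $a+b\omega\mapsto b+a\omega$, $\mathrm{M}+a+b\omega\mapsto\mathrm{M}+b+a\omega$;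 and the reflection $\rho_2$: $a+b\omega\mapsto\mathrm{M}+(k-b-1)+(k-a-1)\omega$, $\mathrm{M}+a+b\omega\mapsto(k-b-1)+(k-a-1)\omega$. Let $\mathrm{sgn}\colon D_6\to\{\pm1\}$ be the homomorphism sending the rotation and $\rho_2$ to $+1$ and $\rho_1$ to $-1$ (the parity of the number of $\rho_1$'s in a word for $\sigma$). With $(\sigma f)(x)=f(\sigma x)$, set $u^{\pm}_{s,t}=\sum_{\sigma\in D_6}\sigma v^{\pm}_{s,t}$ and $w^{\pm}_{s,t}=\sum_{\sigma\in D_6}\mathrm{sgn}(\sigma)\,\sigma v^{\pm}_{s,t}$, functions on $P(k)$. *)

(* Defs.v *)
From Stdlib Require Import Reals ZArith List.
From Coquelicot Require Import Coquelicot.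
Open Scope R_scope.

(* Vertices of the hexagonal torus T(k): VA a b = a + b*omega,
   VB a b = M + a + b*omega; coordinates are integers read modulo k,
   P(k) being represented by 0 <= a, b <= k-1. *)
Inductive vtx : Type := VA (a b : Z) | VB (a b : Z).

Definition in_P (k : nat) (x : vtx) : Prop :=
  match x with
  | VA a b | VB a b => (0 <= a < Z.of_nat k)%Z /\ (0 <= b < Z.of_nat k)%Z
  end.

Definition rotv (k : nat) (x : vtx) : vtx :=
  let K := Z.of_nat k in
  match x with
  | VA a b => VA ((K - a - b - 1) mod K) (a mod K)
  | VB a b => VB ((K - a - b - 2) mod K) (a mod K)
  end.

Definition rho1 (k : nat) (x : vtx) : vtx :=
  let K := Z.of_nat k in
  match x with
  | VA a b => VA (b mod K) (a mod K)
  | VB a b => VB (b mod K) (a mod K)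
  end.

Definition rho2 (k : nat) (x : vtx) : vtx :=
  let K := Z.of_nat k in
  match x with
  | VA a b => VB ((K - b - 1) mod K) ((K - a - 1) mod K)
  | VB a b => VA ((K - b - 1) mod K) ((K - a - 1) mod K)
  end.

(* The 12 elements of D_6 = <rot, rho1, rho2> are the words
   rot^j rho1^e rho2^f (j < 3, e, f booleans); sgn = (-1)^e. *)
Definition D6 : list (nat * bool * bool) :=
  flat_map (fun j => flat_map (fun e => map (fun f => (j, e, f)) (true :: false :: nil))
                               (true :: false :: nil)) (0 :: 1 :: 2 :: nil)%nat.

Definition act (k : nat) (g : nat * bool * bool) (x : vtx) : vtx :=
  let '(j, e, f) := g in
  Nat.iter j (rotv k) ((if e then rho1 k else (fun y : vtx => y)) ((if f then rho2 k else (fun y : vtx => y)) x)).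

Definition sgn (g : nat * bool * bool) : R :=
  let '(_, e, _) := g in if e then -1 else 1.

Definition expi (th : R) : C := (cos th, sin th).

Definition pmR (pm : bool) : R := if pm then 1 else -1.

Definition lam (k : nat) (pm : bool) (s t : nat) : R :=
  3 + pmR pm * sqrt (3 + 2 * cos (2 * PI * INR s / INR k)
                       + 2 * cos (2 * PI * INR t / INR k)
                       + 2 * cos (2 * PI * (INR s - INR t) / INR k)).

Definition vfun (k : nat) (pm : bool) (s t : nat) (x : vtx) : C :=
  match x with
  | VA a b => expi (2 * PI * (INR s * IZR a + INR t * IZR b) / INR k)
  | VB a b => Cmult (Cinv (RtoC (3 - lam k pm s t)))
               (Cmult (expi (2 * PI * (INR s * IZR a + INR t * IZR b) / INR k))
                      (Cplus (Cplus (RtoC 1) (expi (2 * PI * INR s / INR k)))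
                             (expi (2 * PI * INR t / INR k))))
  end.

(* (sigma f)(x) = f (sigma x) *)
Definition ufun (k : nat) (pm : bool) (s t : nat) (x : vtx) : C :=
  fold_right Cplus (RtoC 0) (map (fun g => vfun k pm s t (act k g x)) D6).

Definition wfun (k : nat) (pm : bool) (s t : nat) (x : vtx) : C :=
  fold_right Cplus (RtoC 0)
    (map (fun g => Cmult (RtoC (sgn g)) (vfun k pm s t (act k g x))) D6).

(* The list of indices (pm, s, t) for which u vanishes (fractions k/3 etc.
   are written with cleared denominators). *)
Definition u_list (k : nat) (pm : bool) (s t : nat) : Prop :=
  ((pm = true /\ ((1 <= s /\ 3 * s < k /\ t = k - s)
                 \/ (1 <= t /\ 3 * t < k /\ s = k - t)))
   \/ (pm = false /\ k < 3 * s /\ 3 * s < 2 * k /\ t = k - s)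
   \/ (pm = true /\ ((3 * s < k /\ t = 2 * s) \/ (3 * t < k /\ s = 2 * t)))
   \/ (pm = false /\ ((k < 3 * s /\ 2 * s < k /\ t = 2 * s)
                     \/ (k < 3 * t /\ 2 * t < k /\ s = 2 * t)))
   \/ (pm = false /\ ((k <= 2 * s /\ 3 * s < 2 * k /\ t = 2 * s - k)
                     \/ (k <= 2 * t /\ 3 * t < 2 * k /\ s = 2 * t - k)))
   \/ (pm = true /\ ((2 * k < 3 * s /\ s <= k - 1 /\ t = 2 * s - k)
                    \/ (2 * k < 3 * t /\ t <= k - 1 /\ s = 2 * t - k))))%nat.

Definition w_list (k : nat) (pm : bool) (s t : nat) : Prop :=
  (t = 0 \/ s = 0 \/ s = t \/ u_list k pm s t)%nat.

(* Main.v *)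
Require Import Defs.
From Stdlib Require Import Reals ZArith List Lra Lia Bool.
From Coquelicot Require Import Coquelicot.
Open Scope R_scope.
Import ListNotations.

Lemma expi_add a b : expi (a + b) = Cmult (expi a) (expi b).
Proof. unfold expi, Cmult; simpl. rewrite cos_plus, sin_plus. f_equal; ring. Qed.

Lemma cos_intper x n : cos (x + 2 * IZR n * PI) = cos x.
Proof.
  destruct (Z_le_gt_dec 0 n).
  - rewrite <- (Z2Nat.id n) by lia. rewrite <- INR_IZR_INZ. apply cos_period.
  - replace x with ((x + 2 * IZR n * PI) + 2 * INR (Z.to_nat (- n)) * PI) at 2.
    + now rewrite cos_period.
    + rewrite INR_IZR_INZ, Z2Nat.id by lia. rewrite opp_IZR. ring.
Qed.

Lemma sin_intper x n : sin (x + 2 * IZR n * PI) = sin x.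
Proof.
  destruct (Z_le_gt_dec 0 n).
  - rewrite <- (Z2Nat.id n) by lia. rewrite <- INR_IZR_INZ. apply sin_period.
  - replace x with ((x + 2 * IZR n * PI) + 2 * INR (Z.to_nat (- n)) * PI) at 2.
    + now rewrite sin_period.
    + rewrite INR_IZR_INZ, Z2Nat.id by lia. rewrite opp_IZR. ring.
Qed.

Definition E (k : nat) (n : Z) : C := expi (2 * PI * IZR n / INR k).

Lemma E_add k m n : E k (m + n) = Cmult (E k m) (E k n).
Proof. unfold E. rewrite <- expi_add. f_equal. rewrite plus_IZR. unfold Rdiv. ring. Qed.

Lemma E_period k n m : (1 <= k)%nat -> E k (n + Z.of_nat k * m) = E k n.
Proof.
  intros Hk. unfold E.
  assert (INR k <> 0) by (apply not_0_INR; lia).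
  replace (2 * PI * IZR (n + Z.of_nat k * m) / INR k) with
    (2 * PI * IZR n / INR k + 2 * IZR m * PI).
  - unfold expi. now rewrite cos_intper, sin_intper.
  - rewrite plus_IZR, mult_IZR, <- INR_IZR_INZ. field. auto.
Qed.

Lemma E_congr k p q m : (1 <= k)%nat -> p = (q + Z.of_nat k * m)%Z -> E k p = E k q.
Proof. intros Hk ->. now apply E_period. Qed.

Lemma E0 k : E k 0 = RtoC 1.
Proof. unfold E, expi. simpl. rewrite Rmult_0_r, Rdiv_0_l, cos_0, sin_0. reflexivity. Qed.

Lemma E_half k n : (1 <= k)%nat -> (2 * n = Z.of_nat k)%Z -> E k n = RtoC (-1).
Proof.
  intros Hk H. unfold E, expi.
  assert (INR k <> 0) by (apply not_0_INR; lia).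
  replace (2 * PI * IZR n / INR k) with PI.
  - rewrite cos_PI, sin_PI. reflexivity.
  - rewrite INR_IZR_INZ, <- H, mult_IZR. simpl. field.
    rewrite INR_IZR_INZ, <- H, mult_IZR in H0. simpl in H0. lra.
Qed.

Lemma Cmod_E k n : Cmod (E k n) = 1.
Proof. unfold Cmod, E, expi. simpl.
  pose proof (sin2_cos2 (2 * PI * IZR n / INR k)) as H. unfold Rsqr in H.
  rewrite Rmult_1_r, Rmult_1_r. replace (_ + _) with 1 by lra. apply sqrt_1. Qed.

Lemma E_neq0 k n : E k n <> RtoC 0.
Proof. intro H. pose proof (Cmod_E k n). rewrite H, Cmod_0 in H0. lra. Qed.

Ltac strip x :=
  lazymatch x with
  | Z.modulo ?a _ => strip a
  | Z.add ?a ?b => let a' := strip a in let b' := strip b in constr:(Z.add a' b')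
  | Z.sub ?a ?b => let a' := strip a in let b' := strip b in constr:(Z.sub a' b')
  | Z.mul ?a ?b => let a' := strip a in let b' := strip b in constr:(Z.mul a' b')
  | Z.opp ?a => let a' := strip a in constr:(Z.opp a')
  | _ => x
  end.

Ltac findm K d :=
  match d with
  | K => constr:(1%Z)
  | 0%Z => constr:(0%Z)
  | Z.add ?a ?b => let x := findm K a in let y := findm K b in constr:(Z.add x y)
  | Z.sub ?a ?b => let x := findm K a in let y := findm K b in constr:(Z.sub x y)
  | Z.opp ?a => let x := findm K a in constr:(Z.opp x)
  | Z.mul ?a ?b => let x := findm K a in constr:(Z.mul x b)
  | Z.mul ?a ?b => let y := findm K b in constr:(Z.mul a y)
  | Z.pow ?a 2%Z => let x := findm K a in constr:(Z.mul x a)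
  end.

Lemma Zmod_ex (K x : Z) : K <> 0%Z -> exists q, (x mod K = x + K * q)%Z.
Proof. intros H. exists (- (x / K))%Z. rewrite Z.mod_eq by exact H. ring. Qed.

Ltac elim_mods :=
  repeat match goal with
  | |- context [Z.modulo ?x ?K] =>
      lazymatch x with
      | context [Z.modulo _ _] => fail
      | _ => let q := fresh "q" in let Hq := fresh "Hq" in
             destruct (Zmod_ex K x) as [q Hq]; [lia | rewrite Hq; clear Hq]
      end
  end.

Ltac solve_cong :=
  match goal with
  | Hk : (1 <= ?k)%nat |- E ?k ?p = E ?k ?q =>
    elim_mods;
    match goal with
    | |- E ?k ?p = E ?k ?q =>
    let H := fresh in
    assert (H : (p - q = p - q)%Z) by reflexivity;
    ring_simplify in H;
    match type of H with
    | (?d = _) => let m := findm (Z.of_nat k) d in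
        clear H; apply (E_congr k p q m Hk); ring
    end end
  end.

Ltac strip_all :=
  repeat match goal with
  | |- context [E ?k ?p] =>
      let p' := strip p in
      tryif constr_eq p p' then fail else
      replace (E k p) with (E k p') by solve_cong
  end.

Definition cc k pm s t : C :=
  Cmult (Cinv (RtoC (3 - lam k pm s t))) (Cplus (Cplus (RtoC 1) (E k (Z.of_nat s))) (E k (Z.of_nat t))).

Lemma vA k pm s t a b : vfun k pm s t (VA a b) = E k (Z.of_nat s * a + Z.of_nat t * b).
Proof. simpl. unfold E. f_equal. rewrite plus_IZR, !mult_IZR, <- !INR_IZR_INZ. reflexivity. Qed.

Lemma vB k pm s t a b : vfun k pm s t (VB a b) = Cmult (cc k pm s t) (E k (Z.of_nat s * a + Z.of_nat t * b)).
Proof. simpl. unfold cc. rewrite <- (vA k pm s t a b). simpl. unfold E.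
  rewrite <- !INR_IZR_INZ. ring. Qed.

Arguments vfun : simpl never.

Lemma RtoC_m1 : RtoC (-1) = Copp (RtoC 1).
Proof. unfold RtoC, Copp. simpl. f_equal. ring. Qed.

Lemma mulE_opp k d e : Cmult (Copp (E k d)) (E k e) = Copp (E k (d + e)).
Proof. rewrite E_add. ring. Qed.

Ltac collectE t acc :=
  match t with
  | Cplus ?a ?b => let acc1 := collectE a acc in collectE b acc1
  | Cmult ?a ?b => let acc1 := collectE a acc in collectE b acc1
  | Copp ?a => collectE a acc
  | E ?k ?p => constr:(@cons Z p acc)
  | _ => acc
  end.

Ltac merge_with k p l :=
  match l with
  | cons ?q ?rest =>
      (tryif constr_eq p q then idtac else
        (match goal with
         | |- context [E k q] => try (replace (E k q) with (E k p) by solve_cong)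
         | _ => idtac end));
      merge_with k p rest
  | nil => idtac
  end.

Ltac merge_list k l :=
  match l with
  | cons ?p ?rest =>
      (match goal with
       | |- context [E k p] => merge_with k p rest
       | _ => idtac end);
      merge_list k rest
  | nil => idtac
  end.

Ltac merge_all :=
  match goal with
  | Hk : (1 <= ?k)%nat |- ?L = ?R =>
      let l := collectE L (@nil Z) in
      let l2 := collectE R l in
      merge_list k l2
  end.






Ltac genE := repeat match goal with |- context [E ?k ?p] => generalize (E k p); intro end.


Fixpoint sumN (n : nat) (f : nat -> C) : C :=
  match n with O => RtoC 0 | S n' => Cplus (sumN n' f) (f n') end.

Lemma sumN_ext n f g : (forall i, (i < n)%nat -> f i = g i) -> sumN n f = sumN n g.
Proof. induction n; intros H; simpl; auto. rewrite IHn by (intros; apply H; lia). rewrite H by lia. auto. Qed.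

Lemma sumN_add n f g : sumN n (fun i => Cplus (f i) (g i)) = Cplus (sumN n f) (sumN n g).
Proof. induction n; simpl. ring. rewrite IHn. ring. Qed.

Lemma sumN_scal n c f : sumN n (fun i => Cmult c (f i)) = Cmult c (sumN n f).
Proof. induction n; simpl. ring. rewrite IHn. ring. Qed.

Lemma sumN_scalr n c f : sumN n (fun i => Cmult (f i) c) = Cmult (sumN n f) c.
Proof. induction n; simpl. ring. rewrite IHn. ring. Qed.

Lemma sumN_0 n : sumN n (fun _ => RtoC 0) = RtoC 0.
Proof. induction n; simpl. auto. rewrite IHn. ring. Qed.

Lemma sumN_1 n : sumN n (fun _ => RtoC 1) = RtoC (INR n).
Proof. induction n; simpl sumN. auto. rewrite IHn, S_INR. unfold RtoC, Cplus. simpl. f_equal; ring. Qed.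

Lemma Cmult_reg x y : x <> RtoC 0 -> Cmult x y = RtoC 0 -> y = RtoC 0.
Proof. intros Hx H. replace y with (Cmult (Cinv x) (Cmult x y)). rewrite H. ring.
  field. auto. Qed.

Lemma cos_lt1 th : 0 < th < 2 * PI -> cos th < 1.
Proof.
  intros [H1 H2]. pose proof PI_RGT_0.
  destruct (Rle_lt_dec th PI).
  - rewrite <- cos_0. apply cos_decreasing_1; lra.
  - replace (cos th) with (cos (2 * PI - th)).
    + rewrite <- cos_0. apply cos_decreasing_1; lra.
    + replace (2 * PI - th) with (- th + 2 * IZR 1 * PI) by (simpl; ring).
      now rewrite cos_intper, cos_neg.
Qed.

Lemma E_ne1 k m : (1 <= k)%nat -> (m mod Z.of_nat k <> 0)%Z -> E k m <> RtoC 1.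
Proof.
  intros Hk Hm Heq.
  assert (HK : (0 < Z.of_nat k)%Z) by lia.
  rewrite (E_congr k m (m mod Z.of_nat k) (m / Z.of_nat k) Hk) in Heq
    by (rewrite Z.mod_eq by lia; ring).
  pose proof (Z.mod_pos_bound m (Z.of_nat k) HK) as Hb.
  set (r := (m mod Z.of_nat k)%Z) in *.
  assert (Hr : (0 < r)%Z) by lia.
  unfold E, expi in Heq. injection Heq as Hc _.
  assert (0 < INR k) by (apply lt_0_INR; lia).
  assert (0 < IZR r) by (apply IZR_lt; lia).
  assert (IZR r < INR k) by (rewrite INR_IZR_INZ; apply IZR_lt; lia).
  pose proof PI_RGT_0.
  assert (0 < 2 * PI * IZR r / INR k < 2 * PI).
  { split. apply Rdiv_lt_0_compat; [|lra]. apply Rmult_lt_0_compat; lra.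
    apply Rmult_lt_reg_r with (INR k); auto. unfold Rdiv. rewrite Rmult_assoc, Rinv_l by lra.
    rewrite Rmult_1_r. apply Rmult_lt_compat_l; lra. }
  pose proof (cos_lt1 _ H3). lra.
Qed.

Lemma E_pow k m n : E k (m * Z.of_nat n) = Cpow (E k m) n.
Proof. induction n. simpl. rewrite Z.mul_0_r. apply E0.
  rewrite Nat2Z.inj_succ. simpl Cpow. rewrite <- IHn.
  replace (m * Z.succ (Z.of_nat n))%Z with (m + m * Z.of_nat n)%Z by ring. apply E_add. Qed.

Lemma geo_sum z n : Cmult (Cplus z (Copp (RtoC 1))) (sumN n (fun a => Cpow z a)) = Cplus (Cpow z n) (Copp (RtoC 1)).
Proof. induction n; simpl. ring.
  replace (Cmult (Cplus z (Copp (RtoC 1))) (Cplus (sumN n (fun a : nat => Cpow z a)) (Cpow z n)))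
   with (Cplus (Cmult (Cplus z (Copp (RtoC 1))) (sumN n (fun a : nat => Cpow z a))) (Cmult (Cplus z (Copp (RtoC 1))) (Cpow z n))) by ring.
  rewrite IHn. ring.
Qed.

Definition G k m := sumN k (fun a => E k (m * Z.of_nat a)).

Lemma geo k m : (1 <= k)%nat ->
  G k m = if Z.eqb (m mod Z.of_nat k) 0 then RtoC (INR k) else RtoC 0.
Proof.
  intros Hk. unfold G. destruct (Z.eqb_spec (m mod Z.of_nat k) 0) as [H|H].
  - rewrite <- sumN_1. apply sumN_ext. intros i _. rewrite <- (E0 k).
    apply (E_congr k _ _ (m / Z.of_nat k * Z.of_nat i) Hk).
    rewrite (Z.div_mod m (Z.of_nat k)) at 1 by lia. rewrite H. ring.
  - apply (Cmult_reg (Cplus (E k m) (Copp (RtoC 1)))).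
    + intro H0. apply (E_ne1 k m Hk H). replace (E k m) with (Cplus (Cplus (E k m) (Copp (RtoC 1))) (RtoC 1)) by ring.
      rewrite H0. ring.
    + rewrite (sumN_ext _ _ (fun a => Cpow (E k m) a)) by (intros; apply E_pow).
      rewrite geo_sum, <- E_pow. rewrite (E_congr k _ 0 m Hk) by ring. rewrite E0. ring.
Qed.

Fixpoint evalL (k : nat) (L : list (C * Z * Z * Z)) (a b : Z) : C :=
  match L with
  | nil => RtoC 0
  | (c, al, be, ga) :: L' => Cplus (Cmult c (E k (al * a + be * b + ga))) (evalL k L' a b)
  end.

Fixpoint coefL (k : nat) (L : list (C * Z * Z * Z)) (sg ta : Z) : C :=
  match L with
  | nil => RtoC 0
  | (c, al, be, ga) :: L' =>
      Cplus (if andb (Z.eqb ((al - sg) mod Z.of_nat k) 0) (Z.eqb ((be - ta) mod Z.of_nat k) 0)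
             then Cmult c (E k ga) else RtoC 0) (coefL k L' sg ta)
  end.

Lemma four_aux k L sg ta : (1 <= k)%nat ->
  sumN k (fun a => sumN k (fun b => Cmult (evalL k L (Z.of_nat a) (Z.of_nat b))
                                        (E k (- sg * Z.of_nat a - ta * Z.of_nat b))))
  = Cmult (RtoC (INR k * INR k)) (coefL k L sg ta).
Proof.
  intros Hk. induction L as [|[[[c al] be] ga] L IH]; simpl evalL; simpl coefL.
  - rewrite (sumN_ext _ _ (fun _ => RtoC 0)). rewrite sumN_0. ring.
    intros. rewrite (sumN_ext _ _ (fun _ => RtoC 0)). apply sumN_0. intros. ring.
  - rewrite (sumN_ext _ _ (fun a => Cplus
        (Cmult (Cmult (Cmult c (E k ga)) (E k ((al - sg) * Z.of_nat a))) (G k (be - ta)))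
        (sumN k (fun b => Cmult (evalL k L (Z.of_nat a) (Z.of_nat b))
                                        (E k (- sg * Z.of_nat a - ta * Z.of_nat b)))))).
    + rewrite sumN_add, IH, sumN_scalr, sumN_scal. fold (G k (al - sg)).
      rewrite !geo by auto.
      destruct (Z.eqb ((al - sg) mod Z.of_nat k) 0); destruct (Z.eqb ((be - ta) mod Z.of_nat k) 0);
        simpl andb; unfold RtoC; simpl; unfold Cmult, Cplus; simpl; f_equal; ring.
    + intros a _. unfold G. rewrite <- sumN_scal, <- sumN_add. apply sumN_ext. intros b _.
      replace (Cmult (Cplus (Cmult c (E k (al * Z.of_nat a + be * Z.of_nat b + ga))) (evalL k L (Z.of_nat a) (Z.of_nat b))) (E k (- sg * Z.of_nat a - ta * Z.of_nat b)))
       with (Cplus (Cmult c (Cmult (E k (al * Z.of_nat a + be * Z.of_nat b + ga)) (E k (- sg * Z.of_nat a - ta * Z.of_nat b))))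
               (Cmult (evalL k L (Z.of_nat a) (Z.of_nat b)) (E k (- sg * Z.of_nat a - ta * Z.of_nat b)))) by ring.
      rewrite <- E_add. f_equal.
      replace (al * Z.of_nat a + be * Z.of_nat b + ga + (- sg * Z.of_nat a - ta * Z.of_nat b))%Z with
        (ga + (al - sg) * Z.of_nat a + (be - ta) * Z.of_nat b)%Z by ring.
      rewrite !E_add. ring.
Qed.

Lemma fourier k L sg ta : (1 <= k)%nat ->
  (forall a b, (0 <= a < Z.of_nat k)%Z -> (0 <= b < Z.of_nat k)%Z -> evalL k L a b = RtoC 0) ->
  coefL k L sg ta = RtoC 0.
Proof.
  intros Hk H. apply (Cmult_reg (RtoC (INR k * INR k))).
  - intro H0. injection H0 as H0. assert (0 < INR k) by (apply lt_0_INR; lia). nra.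
  - rewrite <- four_aux by auto. rewrite (sumN_ext _ _ (fun _ => RtoC 0)). apply sumN_0.
    intros a Ha. rewrite (sumN_ext _ _ (fun _ => RtoC 0)). apply sumN_0.
    intros b Hb. rewrite H by lia. ring.
Qed.

Definition wv k s t : C := Cplus (Cplus (RtoC 1) (E k (Z.of_nat s))) (E k (Z.of_nat t)).

Definition Sx k s t : R := 3 + 2 * cos (2 * PI * INR s / INR k)
                       + 2 * cos (2 * PI * INR t / INR k)
                       + 2 * cos (2 * PI * (INR s - INR t) / INR k).

Lemma lam_Sx k pm s t : lam k pm s t = 3 + pmR pm * sqrt (Sx k s t).
Proof. reflexivity. Qed.

Lemma Sx_eq k s t : Sx k s t = (fst (wv k s t)) ^ 2 + (snd (wv k s t)) ^ 2.
Proof.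
  unfold Sx, wv, E, expi. simpl. rewrite <- !INR_IZR_INZ.
  replace (2 * PI * (INR s - INR t) / INR k) with (2 * PI * INR s / INR k - 2 * PI * INR t / INR k) by (unfold Rdiv; ring).
  rewrite cos_minus.
  pose proof (sin2_cos2 (2 * PI * INR s / INR k)). pose proof (sin2_cos2 (2 * PI * INR t / INR k)).
  unfold Rsqr in *. nra.
Qed.

Lemma w_nz k pm s t : lam k pm s t <> 3 -> wv k s t <> RtoC 0.
Proof.
  intros H Hw. apply H. rewrite lam_Sx, Sx_eq, Hw. simpl. 
  replace (0 * (0 * 1) + 0 * (0 * 1)) with 0 by ring. rewrite sqrt_0. ring.
Qed.

Lemma cc_wv k pm s t : cc k pm s t = Cmult (Cinv (RtoC (3 - lam k pm s t))) (wv k s t).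
Proof. reflexivity. Qed.

Lemma cc_form k pm s t r d : wv k s t = Cmult (RtoC r) (E k d) -> r <> 0 ->
  cc k pm s t = Cmult (RtoC (- pmR pm * (r / Rabs r))) (E k d).
Proof.
  intros Hw Hr. rewrite cc_wv, lam_Sx, Sx_eq, Hw.
  assert (Hf : fst (Cmult (RtoC r) (E k d)) ^ 2 + snd (Cmult (RtoC r) (E k d)) ^ 2 = Rsqr r).
  { unfold E, expi, Cmult, RtoC. simpl. pose proof (sin2_cos2 (2 * PI * IZR d / INR k)).
    unfold Rsqr in *. nra. }
  rewrite Hf, sqrt_Rsqr_abs.
  assert (Ha : Rabs r <> 0) by (apply Rabs_no_R0; auto).
  assert (Hp : pmR pm * pmR pm = 1) by (destruct pm; simpl; ring).
  replace (3 - (3 + pmR pm * Rabs r)) with (- pmR pm * Rabs r) by ring.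
  rewrite <- RtoC_inv.
  - rewrite Cmult_assoc, <- !RtoC_mult.
    replace (/ (- pmR pm * Rabs r) * r) with (- pmR pm * (r / Rabs r)); [reflexivity|].
    destruct pm; simpl; field; auto.
  - intro H0. apply (Rmult_integral) in H0. destruct H0; [destruct pm; simpl in H; lra | auto].
Qed.

Lemma cc_pos k pm s t r d : wv k s t = Cmult (RtoC r) (E k d) -> 0 < r ->
  cc k pm s t = Cmult (RtoC (- pmR pm)) (E k d).
Proof. intros Hw Hr. rewrite (cc_form k pm s t r d Hw) by lra. rewrite Rabs_pos_eq by lra.
  f_equal. f_equal. field. lra. Qed.

Lemma cc_neg k pm s t r d : wv k s t = Cmult (RtoC r) (E k d) -> r < 0 ->
  cc k pm s t = Cmult (RtoC (pmR pm)) (E k d).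
Proof. intros Hw Hr. rewrite (cc_form k pm s t r d Hw) by lra. rewrite Rabs_left by lra.
  f_equal. f_equal. field. lra. Qed.

Lemma cos_2PI3 : cos (2 * PI / 3) = - (1/2).
Proof. replace (2 * PI / 3) with (PI - PI / 3) by field. rewrite Rtrigo_facts.cos_pi_minus, cos_PI3. ring. Qed.

Lemma cos_sym x : cos (2 * PI - x) = cos x.
Proof. replace (2 * PI - x) with (- x + 2 * IZR 1 * PI) by (simpl; ring). now rewrite cos_intper, cos_neg. Qed.

Lemma cosq_pos q : (0 <= q < 1/3) \/ (2/3 < q < 1) -> 0 < 1 + 2 * cos (2 * PI * q).
Proof.
  pose proof PI_RGT_0. pose proof cos_2PI3. intros [[H1 H2]|[H1 H2]].
  - assert (cos (2 * PI / 3) < cos (2 * PI * q)) by (apply cos_decreasing_1; nra). lra.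
  - rewrite <- cos_sym.
    assert (cos (2 * PI / 3) < cos (2 * PI - 2 * PI * q)) by (apply cos_decreasing_1; nra). lra.
Qed.

Lemma cosq_neg q : 1/3 < q < 2/3 -> 1 + 2 * cos (2 * PI * q) < 0.
Proof.
  pose proof PI_RGT_0. pose proof cos_2PI3. intros [H1 H2].
  destruct (Rle_lt_dec q (1/2)).
  - assert (cos (2 * PI * q) < cos (2 * PI / 3)) by (apply cos_decreasing_1; nra). lra.
  - rewrite <- cos_sym.
    assert (cos (2 * PI - 2 * PI * q) < cos (2 * PI / 3)) by (apply cos_decreasing_1; nra). lra.
Qed.

Lemma cosq_zero q : q = 1/3 \/ q = 2/3 -> 1 + 2 * cos (2 * PI * q) = 0.
Proof.
  pose proof cos_2PI3. intros [->| ->].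
  - replace (2 * PI * (1/3)) with (2 * PI / 3) by field. lra.
  - rewrite <- cos_sym. replace (2 * PI - 2 * PI * (2/3)) with (2 * PI / 3) by field. lra.
Qed.

Definition qq k (n : nat) : R := IZR (Z.of_nat n) / INR k.

Lemma qq_lt k n m d : (1 <= k)%nat -> (m * n < d * k)%nat -> IZR (Z.of_nat m) * qq k n < IZR (Z.of_nat d).
Proof. intros Hk H. unfold qq. rewrite <- !INR_IZR_INZ.
  assert (0 < INR k) by (apply lt_0_INR; lia).
  apply Rmult_lt_reg_r with (INR k); auto. unfold Rdiv. 
  replace (INR m * (INR n * / INR k) * INR k) with (INR m * INR n) by (field; lra).
  rewrite <- !mult_INR. apply lt_INR. lia. Qed.

Lemma qq_gt k n m d : (1 <= k)%nat -> (d * k < m * n)%nat -> IZR (Z.of_nat d) < IZR (Z.of_nat m) * qq k n.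
Proof. intros Hk H. unfold qq. rewrite <- !INR_IZR_INZ.
  assert (0 < INR k) by (apply lt_0_INR; lia).
  apply Rmult_lt_reg_r with (INR k); auto. unfold Rdiv. 
  replace (INR m * (INR n * / INR k) * INR k) with (INR m * INR n) by (field; lra).
  rewrite <- !mult_INR. apply lt_INR. lia. Qed.

Lemma qq_eq k n m d : (1 <= k)%nat -> (m * n = d * k)%nat -> IZR (Z.of_nat m) * qq k n = IZR (Z.of_nat d).
Proof. intros Hk H. unfold qq. rewrite <- !INR_IZR_INZ.
  assert (0 < INR k) by (apply lt_0_INR; lia).
  apply Rmult_eq_reg_r with (INR k); [|lra]. unfold Rdiv. 
  replace (INR m * (INR n * / INR k) * INR k) with (INR m * INR n) by (field; lra).
  rewrite <- !mult_INR. f_equal. lia. Qed.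

Lemma qq_ge0 k n : (1 <= k)%nat -> 0 <= qq k n.
Proof. intros Hk. unfold qq. rewrite <- INR_IZR_INZ. 
  - apply Rmult_le_pos. apply pos_INR. left. apply Rinv_0_lt_compat, lt_0_INR. lia. Qed.

Definition rr k n := 1 + 2 * cos (2 * PI * qq k n).

Lemma rr_pos k n : (1 <= k)%nat -> (n < k)%nat -> (3 * n < k \/ 2 * k < 3 * n)%nat -> 0 < rr k n.
Proof. intros Hk Hn H. apply cosq_pos.
  pose proof (qq_ge0 k n Hk). destruct H.
  - left. pose proof (qq_lt k n 3 1 Hk ltac:(lia)). simpl in *. lra.
  - right. pose proof (qq_gt k n 3 2 Hk ltac:(lia)). pose proof (qq_lt k n 1 1 Hk ltac:(lia)). simpl in *. lra.
Qed.

Lemma rr_neg k n : (1 <= k)%nat -> (k < 3 * n < 2 * k)%nat -> rr k n < 0.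
Proof. intros Hk H. apply cosq_neg.
  pose proof (qq_gt k n 3 1 Hk ltac:(lia)). pose proof (qq_lt k n 3 2 Hk ltac:(lia)). simpl in *. lra.
Qed.

Lemma rr_zero k n : (1 <= k)%nat -> (3 * n = k \/ 3 * n = 2 * k)%nat -> rr k n = 0.
Proof. intros Hk H. apply cosq_zero. destruct H.
  - left. pose proof (qq_eq k n 3 1 Hk ltac:(lia)). simpl in *. lra.
  - right. pose proof (qq_eq k n 3 2 Hk ltac:(lia)). simpl in *. lra.
Qed.

Lemma E_comp k n : E k (Z.of_nat n) = (cos (2 * PI * qq k n), sin (2 * PI * qq k n)).
Proof. unfold E, expi, qq. f_equal; f_equal; unfold Rdiv; ring. Qed.

Lemma wE k s t : (1 <= k)%nat -> (Z.of_nat s + Z.of_nat t = Z.of_nat k)%Z ->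
  wv k s t = Cmult (RtoC (rr k s)) (E k 0).
Proof. intros Hk H. unfold wv. rewrite E0.
  rewrite (E_congr k (Z.of_nat t) (- Z.of_nat s) 1 Hk) by lia.
  unfold E at 2. rewrite opp_IZR. rewrite E_comp. unfold expi, rr, qq.
  replace (2 * PI * - IZR (Z.of_nat s) / INR k) with (- (2 * PI * (IZR (Z.of_nat s) / INR k))) by (unfold Rdiv; ring).
  rewrite cos_neg, sin_neg. unfold RtoC, Cplus, Cmult. simpl. f_equal; ring.
Qed.

Lemma wF k s t d : (1 <= k)%nat -> (Z.of_nat t = 2 * Z.of_nat s - Z.of_nat k * d)%Z ->
  wv k s t = Cmult (RtoC (rr k s)) (E k (Z.of_nat s)).
Proof. intros Hk H. unfold wv.
  rewrite (E_congr k (Z.of_nat t) (Z.of_nat s + Z.of_nat s) (-d) Hk) by lia.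
  rewrite E_add, E_comp. unfold rr.
  pose proof (sin2_cos2 (2 * PI * qq k s)). unfold Rsqr in *.
  unfold RtoC, Cplus, Cmult. simpl. f_equal; nra.
Qed.

Lemma wG k s t d : (1 <= k)%nat -> (Z.of_nat s = 2 * Z.of_nat t - Z.of_nat k * d)%Z ->
  wv k s t = Cmult (RtoC (rr k t)) (E k (Z.of_nat t)).
Proof. intros Hk H. unfold wv.
  rewrite (E_congr k (Z.of_nat s) (Z.of_nat t + Z.of_nat t) (-d) Hk) by lia.
  rewrite E_add, E_comp. unfold rr.
  pose proof (sin2_cos2 (2 * PI * qq k t)). unfold Rsqr in *.
  unfold RtoC, Cplus, Cmult. simpl. f_equal; nra.
Qed.

Lemma wB k s t : (1 <= k)%nat -> Z.of_nat s = 0%Z -> (2 * Z.of_nat t = Z.of_nat k)%Z ->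
  wv k s t = Cmult (RtoC 1) (E k 0).
Proof. intros Hk H1 H2. unfold wv. rewrite H1, E0, (E_half k (Z.of_nat t)) by auto.
  unfold RtoC, Cplus, Cmult. simpl. f_equal; ring. Qed.

Lemma wBs k s t : (1 <= k)%nat -> Z.of_nat t = 0%Z -> (2 * Z.of_nat s = Z.of_nat k)%Z ->
  wv k s t = Cmult (RtoC 1) (E k 0).
Proof. intros Hk H1 H2. unfold wv. rewrite H1, E0, (E_half k (Z.of_nat s)) by auto.
  unfold RtoC, Cplus, Cmult. simpl. f_equal; ring. Qed.

Lemma wD k s t : (1 <= k)%nat -> Z.of_nat s = Z.of_nat t -> (2 * Z.of_nat s = Z.of_nat k)%Z ->
  wv k s t = Cmult (RtoC (-1)) (E k 0).
Proof. intros Hk H1 H2. unfold wv. rewrite <- H1, E0, (E_half k (Z.of_nat s)) by auto.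
  unfold RtoC, Cplus, Cmult. simpl. f_equal; ring. Qed.

Lemma wA k s t : (1 <= k)%nat -> Z.of_nat s = 0%Z -> Z.of_nat t = 0%Z ->
  wv k s t = Cmult (RtoC 3) (E k 0).
Proof. intros Hk H1 H2. unfold wv. rewrite H1, H2, E0.
  unfold RtoC, Cplus, Cmult. simpl. f_equal; ring. Qed.

Definition Lu (c : C) (S T : Z) : list (C * Z * Z * Z) :=
 [ (RtoC 1, S, T, 0%Z); (RtoC 1, (T-S)%Z, (-S)%Z, (-S)%Z); (RtoC 1, (-T)%Z, (S-T)%Z, (-T)%Z);
   (RtoC 1, T, S, 0%Z); (RtoC 1, (-S)%Z, (T-S)%Z, (-S)%Z); (RtoC 1, (S-T)%Z, (-T)%Z, (-T)%Z);
   (c, (-T)%Z, (-S)%Z, (-S-T)%Z); (c, S, (S-T)%Z, (-T)%Z); (c, (T-S)%Z, T, (-S)%Z);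
   (c, (-S)%Z, (-T)%Z, (-S-T)%Z); (c, (S-T)%Z, S, (-T)%Z); (c, T, (T-S)%Z, (-S)%Z) ].

Definition Lw (c : C) (S T : Z) : list (C * Z * Z * Z) :=
 [ (RtoC 1, S, T, 0%Z); (RtoC 1, (T-S)%Z, (-S)%Z, (-S)%Z); (RtoC 1, (-T)%Z, (S-T)%Z, (-T)%Z);
   (Copp (RtoC 1), T, S, 0%Z); (Copp (RtoC 1), (-S)%Z, (T-S)%Z, (-S)%Z); (Copp (RtoC 1), (S-T)%Z, (-T)%Z, (-T)%Z);
   (c, (-T)%Z, (-S)%Z, (-S-T)%Z); (c, S, (S-T)%Z, (-T)%Z); (c, (T-S)%Z, T, (-S)%Z);
   (Copp c, (-S)%Z, (-T)%Z, (-S-T)%Z); (Copp c, (S-T)%Z, S, (-T)%Z); (Copp c, T, (T-S)%Z, (-S)%Z) ].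

Lemma expU k pm s t a b : (1 <= k)%nat ->
  ufun k pm s t (VA a b) = evalL k (Lu (cc k pm s t) (Z.of_nat s) (Z.of_nat t)) a b.
Proof. intros Hk. unfold ufun. simpl. rewrite ?vA, ?vB, ?Cmult_1_l. strip_all. merge_all. genE. ring. Qed.

Lemma expW k pm s t a b : (1 <= k)%nat ->
  wfun k pm s t (VA a b) = evalL k (Lw (cc k pm s t) (Z.of_nat s) (Z.of_nat t)) a b.
Proof. intros Hk. unfold wfun. simpl. rewrite ?vA, ?vB, ?RtoC_m1, ?Cmult_1_l. strip_all. merge_all. genE. ring. Qed.

Ltac solve_ul := unfold u_list;
  repeat match goal with |- ?A \/ ?B => first [left; solve [split; [reflexivity | lia]] | right] end;
  try solve [split; [reflexivity | lia]].

Lemma modz_cases K X : (0 < K)%Z -> (-3 * K < X < 3 * K)%Z -> (X mod K = 0)%Z ->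
  (X = 0 \/ X = K \/ X = - K \/ X = 2 * K \/ X = - 2 * K)%Z.
Proof. intros HK Hb H. apply Z.mod_divide in H; [|lia]. destruct H as [q ->].
  assert (-3 < q < 3)%Z by nia.
  assert (q = 0 \/ q = 1 \/ q = -1 \/ q = 2 \/ q = -2)%Z as Hq by lia.
  destruct Hq as [->|[->|[->|[->| ->]]]]; lia. Qed.

Lemma modnz K X : (0 < K)%Z -> (X mod K <> 0)%Z ->
  (X <> 0 /\ X <> K /\ X <> - K /\ X <> 2 * K /\ X <> - 2 * K)%Z.
Proof. intros HK H. repeat split; intro He; apply H; subst X.
  - apply Z.mod_0_l; lia.
  - apply Z.mod_same; lia.
  - replace (- K)%Z with (-1 * K)%Z by ring. apply Z.mod_mul; lia.
  - apply Z.mod_mul; lia.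
  - replace (- 2 * K)%Z with (-2 * K)%Z by ring. apply Z.mod_mul; lia.
Qed.

Lemma mod_false K X : (0 < K)%Z -> (-3 * K < X < 3 * K)%Z -> X <> 0%Z -> X <> K -> X <> (- K)%Z ->
  X <> (2 * K)%Z -> X <> (- 2 * K)%Z -> Z.eqb (X mod K) 0 = false.
Proof. intros. apply Z.eqb_neq. intro Hm. apply modz_cases in Hm; lia. Qed.

Lemma mod_true K X c : (0 < K)%Z -> X = (c * K)%Z -> Z.eqb (X mod K) 0 = true.
Proof. intros HK ->. apply Z.eqb_eq. apply Z.mod_mul. lia. Qed.

Ltac dc :=
  repeat match goal with
  | |- context [Z.eqb (?X mod ?K) 0] =>
    first [ rewrite (mod_false K X) by lia
          | rewrite (mod_true K X 0) by lia | rewrite (mod_true K X 1) by lia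
          | rewrite (mod_true K X (-1)) by lia | rewrite (mod_true K X 2) by lia
          | rewrite (mod_true K X (-2)) by lia ]
  end.

Lemma Emul_assoc k x d g : Cmult (Cmult x (E k d)) (E k g) = Cmult x (E k (d + g)).
Proof. rewrite E_add. ring. Qed.

Ltac eval1 := repeat match goal with
  | H : context [E ?k ?p] |- _ =>
      tryif constr_eq p 0%Z then fail else
      (replace (E k p) with (E k 0) in H by (symmetry; solve_cong))
  end; rewrite ?E0 in *.

Ltac redc H := revert H; unfold Lu; cbn [coefL]; dc; rewrite ?andb_false_r, ?andb_false_l; cbn [andb]; intro H.

Ltac cong_lia := match goal with Hk : (1 <= ?k)%nat |- E ?k ?p = E ?k ?q =>
  first [apply (E_congr k p q 0 Hk); lia | apply (E_congr k p q 1 Hk); lia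
        | apply (E_congr k p q (-1) Hk); lia | apply (E_congr k p q 2 Hk); lia
        | apply (E_congr k p q (-2) Hk); lia] end.

Ltac evalE0 H := rewrite ?Emul_assoc in H;
  repeat match type of H with context [E ?k ?p] => tryif constr_eq p 0%Z then fail else
    replace (E k p) with (E k 0) in H by cong_lia end; rewrite ?E0 in H.

Ltac evalEh H X := 
  repeat match type of H with context [E ?k ?p] => tryif constr_eq p X then fail else
    replace (E k p) with (E k X) in H by cong_lia end; rewrite (E_half _ X) in H by lia.

Ltac finish H pm := apply (f_equal fst) in H; simpl in H;
  destruct pm; simpl in H; first [solve [solve_ul] | exfalso; lra].

Definition CU k pm s t := coefL k (Lu (cc k pm s t) (Z.of_nat s) (Z.of_nat t)) (Z.of_nat s) (Z.of_nat t).

Lemma caseA k pm s t : (1 <= k)%nat -> s = 0%nat -> t = 0%nat ->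
  CU k pm s t = RtoC 0 -> u_list k pm s t.
Proof.
  intros Hk Hs Ht H. unfold CU in H.
  rewrite (cc_pos k pm s t 3 0 (wA k s t Hk ltac:(lia) ltac:(lia))) in H by lra.
  redc H. evalE0 H. finish H pm.
Qed.

Lemma caseB k pm s t : (1 <= k)%nat -> (t < k)%nat -> s = 0%nat -> t <> 0%nat -> (2 * t = k)%nat ->
  CU k pm s t = RtoC 0 -> u_list k pm s t.
Proof.
  intros Hk Htk Hs Ht Ht2 H. unfold CU in H.
  rewrite (cc_pos k pm s t 1 0 (wB k s t Hk ltac:(lia) ltac:(lia))) in H by lra.
  redc H. evalE0 H. evalEh H (Z.of_nat t). finish H pm.
Qed.

Lemma caseB' k pm s t : (1 <= k)%nat -> (t < k)%nat -> s = 0%nat -> t <> 0%nat -> (2 * t <> k)%nat ->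
  CU k pm s t = RtoC 0 -> u_list k pm s t.
Proof.
  intros Hk Htk Hs Ht Ht2 H. unfold CU in H.
  redc H. evalE0 H. finish H pm.
Qed.

Lemma caseC k pm s t : (1 <= k)%nat -> (s < k)%nat -> t = 0%nat -> s <> 0%nat -> (2 * s = k)%nat ->
  CU k pm s t = RtoC 0 -> u_list k pm s t.
Proof.
  intros Hk Htk Hs Ht Ht2 H. unfold CU in H.
  rewrite (cc_pos k pm s t 1 0 (wBs k s t Hk ltac:(lia) ltac:(lia))) in H by lra.
  redc H. evalE0 H. evalEh H (Z.of_nat s). finish H pm.
Qed.

Lemma caseC' k pm s t : (1 <= k)%nat -> (s < k)%nat -> t = 0%nat -> s <> 0%nat -> (2 * s <> k)%nat ->
  CU k pm s t = RtoC 0 -> u_list k pm s t.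
Proof.
  intros Hk Htk Hs Ht Ht2 H. unfold CU in H.
  redc H. evalE0 H. finish H pm.
Qed.

Lemma caseD k pm s t : (1 <= k)%nat -> (s < k)%nat -> s = t -> s <> 0%nat -> (2 * s = k)%nat ->
  CU k pm s t = RtoC 0 -> u_list k pm s t.
Proof.
  intros Hk Htk Hs Ht Ht2 H. unfold CU in H.
  rewrite (cc_neg k pm s t (-1) 0 (wD k s t Hk ltac:(lia) ltac:(lia))) in H by lra.
  redc H. evalE0 H. finish H pm.
Qed.

Lemma caseD' k pm s t : (1 <= k)%nat -> (s < k)%nat -> s = t -> s <> 0%nat -> (2 * s <> k)%nat ->
  CU k pm s t = RtoC 0 -> u_list k pm s t.
Proof.
  intros Hk Htk Hs Ht Ht2 H. unfold CU in H.
  redc H. evalE0 H. finish H pm.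
Qed.

Lemma caseE k pm s t : (1 <= k)%nat -> (s < k)%nat -> (t < k)%nat -> s <> 0%nat -> t <> 0%nat -> s <> t ->
  (s + t = k)%nat -> lam k pm s t <> 3 ->
  CU k pm s t = RtoC 0 -> u_list k pm s t.
Proof.
  intros Hk Hsk Htk Hs Ht Hst Hsum Hl H. unfold CU in H.
  assert (Hw := wE k s t Hk ltac:(lia)).
  destruct (lt_eq_lt_dec (3 * s) k) as [[Hlt|Heq]|Hgt].
  - rewrite (cc_pos k pm s t _ 0 Hw (rr_pos k s Hk Hsk ltac:(lia))) in H.
    redc H. evalE0 H. finish H pm.
  - exfalso. apply (w_nz k pm s t Hl). rewrite Hw, rr_zero by lia. unfold RtoC, Cmult; simpl; f_equal; ring.
  - destruct (lt_eq_lt_dec (3 * s) (2 * k)) as [[Hlt2|Heq2]|Hgt2].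
    + rewrite (cc_neg k pm s t _ 0 Hw (rr_neg k s Hk ltac:(lia))) in H.
      redc H. evalE0 H. finish H pm.
    + exfalso. apply (w_nz k pm s t Hl). rewrite Hw, rr_zero by lia. unfold RtoC, Cmult; simpl; f_equal; ring.
    + rewrite (cc_pos k pm s t _ 0 Hw (rr_pos k s Hk Hsk ltac:(lia))) in H.
      redc H. evalE0 H. finish H pm.
Qed.

Lemma caseF k pm s t d : (1 <= k)%nat -> (s < k)%nat -> (t < k)%nat -> s <> 0%nat -> t <> 0%nat -> s <> t ->
  (s + t <> k)%nat -> (d = 0 \/ d = 1)%Z -> (Z.of_nat t = 2 * Z.of_nat s - Z.of_nat k * d)%Z -> lam k pm s t <> 3 ->
  CU k pm s t = RtoC 0 -> u_list k pm s t.
Proof.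
  intros Hk Hsk Htk Hs Ht Hst Hsum Hd Hrel Hl H. unfold CU in H.
  assert (Hw := wF k s t d Hk Hrel).
  destruct Hd as [-> | ->].
  - destruct (lt_eq_lt_dec (3 * s) k) as [[Hlt|Heq]|Hgt].
    + rewrite (cc_pos k pm s t _ _ Hw (rr_pos k s Hk Hsk ltac:(lia))) in H.
      redc H. evalE0 H. finish H pm.
    + exfalso. lia.
    + rewrite (cc_neg k pm s t _ _ Hw (rr_neg k s Hk ltac:(lia))) in H.
      redc H. evalE0 H. finish H pm.
  - destruct (lt_eq_lt_dec (3 * s) (2 * k)) as [[Hlt|Heq]|Hgt].
    + rewrite (cc_neg k pm s t _ _ Hw (rr_neg k s Hk ltac:(lia))) in H.
      redc H. evalE0 H. finish H pm.
    + exfalso. lia.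
    + rewrite (cc_pos k pm s t _ _ Hw (rr_pos k s Hk Hsk ltac:(lia))) in H.
      redc H. evalE0 H. finish H pm.
Qed.

Lemma caseG k pm s t d : (1 <= k)%nat -> (s < k)%nat -> (t < k)%nat -> s <> 0%nat -> t <> 0%nat -> s <> t ->
  (s + t <> k)%nat -> (d = 0 \/ d = 1)%Z -> (Z.of_nat s = 2 * Z.of_nat t - Z.of_nat k * d)%Z -> lam k pm s t <> 3 ->
  CU k pm s t = RtoC 0 -> u_list k pm s t.
Proof.
  intros Hk Hsk Htk Hs Ht Hst Hsum Hd Hrel Hl H. unfold CU in H.
  assert (Hw := wG k s t d Hk Hrel).
  destruct Hd as [-> | ->].
  - destruct (lt_eq_lt_dec (3 * t) k) as [[Hlt|Heq]|Hgt].
    + rewrite (cc_pos k pm s t _ _ Hw (rr_pos k t Hk Htk ltac:(lia))) in H.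
      redc H. evalE0 H. finish H pm.
    + exfalso. lia.
    + rewrite (cc_neg k pm s t _ _ Hw (rr_neg k t Hk ltac:(lia))) in H.
      redc H. evalE0 H. finish H pm.
  - destruct (lt_eq_lt_dec (3 * t) (2 * k)) as [[Hlt|Heq]|Hgt].
    + rewrite (cc_neg k pm s t _ _ Hw (rr_neg k t Hk ltac:(lia))) in H.
      redc H. evalE0 H. finish H pm.
    + exfalso. lia.
    + rewrite (cc_pos k pm s t _ _ Hw (rr_pos k t Hk Htk ltac:(lia))) in H.
      redc H. evalE0 H. finish H pm.
Qed.

Lemma caseH k pm s t : (1 <= k)%nat -> (s < k)%nat -> (t < k)%nat -> s <> 0%nat -> t <> 0%nat -> s <> t ->
  (s + t <> k)%nat -> (t <> 2 * s)%nat -> (t + k <> 2 * s)%nat -> (s <> 2 * t)%nat -> (s + k <> 2 * t)%nat ->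
  CU k pm s t = RtoC 0 -> u_list k pm s t.
Proof.
  intros Hk Hsk Htk Hs Ht Hst Hsum H1 H2 H3 H4 H. unfold CU in H.
  destruct (Nat.eq_dec (2 * s) k); redc H; evalE0 H; finish H pm.
Qed.

Lemma onlyU k pm s t : (1 <= k)%nat -> (s < k)%nat -> (t < k)%nat -> lam k pm s t <> 3 ->
  CU k pm s t = RtoC 0 -> u_list k pm s t.
Proof.
  intros Hk Hsk Htk Hl H.
  destruct (Nat.eq_dec s 0) as [Hs|Hs].
  - destruct (Nat.eq_dec t 0) as [Ht|Ht]. now apply caseA.
    destruct (Nat.eq_dec (2 * t) k). now apply caseB. now apply caseB'.
  - destruct (Nat.eq_dec t 0) as [Ht|Ht].
    destruct (Nat.eq_dec (2 * s) k). now apply caseC. now apply caseC'.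
    destruct (Nat.eq_dec s t) as [Hst|Hst].
    destruct (Nat.eq_dec (2 * s) k). now apply caseD. now apply caseD'.
    destruct (Nat.eq_dec (s + t) k). now apply caseE.
    destruct (Nat.eq_dec t (2 * s)). apply (caseF k pm s t 0); auto; lia.
    destruct (Nat.eq_dec (t + k) (2 * s)). apply (caseF k pm s t 1); auto; lia.
    destruct (Nat.eq_dec s (2 * t)). apply (caseG k pm s t 0); auto; lia.
    destruct (Nat.eq_dec (s + k) (2 * t)). apply (caseG k pm s t 1); auto; lia.
    now apply caseH.
Qed.

Definition CW k pm s t := coefL k (Lw (cc k pm s t) (Z.of_nat s) (Z.of_nat t)) (Z.of_nat s) (Z.of_nat t).

Lemma CW_CU k pm s t : (1 <= k)%nat -> (s < k)%nat -> (t < k)%nat -> s <> 0%nat -> t <> 0%nat -> s <> t ->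
  CW k pm s t = CU k pm s t.
Proof.
  intros Hk Hsk Htk Hs Ht Hst. unfold CW, CU, Lw, Lu. cbn [coefL].
  destruct (Nat.eq_dec (2 * s) k); dc; rewrite ?andb_false_r, ?andb_false_l; cbn [andb]; ring.
Qed.

Lemma onlyW k pm s t : (1 <= k)%nat -> (s < k)%nat -> (t < k)%nat -> lam k pm s t <> 3 ->
  CW k pm s t = RtoC 0 -> w_list k pm s t.
Proof.
  intros Hk Hsk Htk Hl H. unfold w_list.
  destruct (Nat.eq_dec s 0). tauto. destruct (Nat.eq_dec t 0). tauto. destruct (Nat.eq_dec s t). tauto.
  right; right; right. apply onlyU; auto. rewrite <- CW_CU; auto.
Qed.

Ltac prep Hc := simpl; rewrite ?vA, ?vB; (try rewrite Hc); rewrite ?mulE_opp, ?RtoC_m1, ?Cmult_1_l; strip_all.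
Ltac fin := merge_all; genE; ring.

Lemma famU1 k pm s t x : (1 <= k)%nat -> (Z.of_nat s + Z.of_nat t = Z.of_nat k)%Z ->
  cc k pm s t = Copp (E k 0) -> ufun k pm s t x = RtoC 0 /\ wfun k pm s t x = RtoC 0.
Proof. intros Hk Hst Hc. unfold ufun, wfun. destruct x; split; prep Hc;
  replace (Z.of_nat t) with (Z.of_nat k - Z.of_nat s)%Z by lia; fin.
Qed.

Lemma famU2 k pm s t x d : (1 <= k)%nat -> (Z.of_nat t = 2 * Z.of_nat s - Z.of_nat k * d)%Z ->
  cc k pm s t = Copp (E k (Z.of_nat s)) -> ufun k pm s t x = RtoC 0 /\ wfun k pm s t x = RtoC 0.
Proof. intros Hk Hst Hc. unfold ufun, wfun. destruct x; split; prep Hc;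
  rewrite Hst; fin.
Qed.

Lemma famU3 k pm s t x d : (1 <= k)%nat -> (Z.of_nat s = 2 * Z.of_nat t - Z.of_nat k * d)%Z ->
  cc k pm s t = Copp (E k (Z.of_nat t)) -> ufun k pm s t x = RtoC 0 /\ wfun k pm s t x = RtoC 0.
Proof. intros Hk Hst Hc. unfold ufun, wfun. destruct x; split; prep Hc;
  rewrite Hst; fin.
Qed.

Lemma famW1 k pm s t x : (1 <= k)%nat -> (Z.of_nat t = 0)%Z -> wfun k pm s t x = RtoC 0.
Proof. intros Hk Hst. unfold wfun. destruct x; prep Hk; rewrite Hst; fin. Qed.
Lemma famW2 k pm s t x : (1 <= k)%nat -> (Z.of_nat s = 0)%Z -> wfun k pm s t x = RtoC 0.
Proof. intros Hk Hst. unfold wfun. destruct x; prep Hk; rewrite Hst; fin. Qed.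
Lemma famW3 k pm s t x : (1 <= k)%nat -> (Z.of_nat s = Z.of_nat t)%Z -> wfun k pm s t x = RtoC 0.
Proof. intros Hk Hst. unfold wfun. destruct x; prep Hk; rewrite Hst; fin. Qed.

Lemma cc_to_opp k pm s t d x : cc k pm s t = Cmult (RtoC x) (E k d) -> x = -1 -> cc k pm s t = Copp (E k d).
Proof. intros H Hx. rewrite H. replace (RtoC x) with (Copp (RtoC 1)). ring.
  unfold RtoC, Copp. simpl. f_equal; lra. Qed.

Lemma listU_van k pm s t x : (1 <= k)%nat -> (s < k)%nat -> (t < k)%nat -> u_list k pm s t ->
  ufun k pm s t x = RtoC 0 /\ wfun k pm s t x = RtoC 0.
Proof.
  intros Hk Hsk Htk H. unfold u_list in H.
  destruct H as [[-> [H|H]] | [[-> H] | [[-> [H|H]] | [[-> [H|H]] | [[-> [H|H]] | [-> [H|H]]]]]]].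
  - apply famU1; auto. lia. apply (cc_to_opp _ _ _ _ _ _ (cc_pos k true s t _ 0 (wE k s t Hk ltac:(lia)) (rr_pos k s Hk Hsk ltac:(lia)))). simpl; lra.
  - apply famU1; auto. lia. apply (cc_to_opp _ _ _ _ _ _ (cc_pos k true s t _ 0 (wE k s t Hk ltac:(lia)) (rr_pos k s Hk Hsk ltac:(lia)))). simpl; lra.
  - apply famU1; auto. lia. apply (cc_to_opp _ _ _ _ _ _ (cc_neg k false s t _ 0 (wE k s t Hk ltac:(lia)) (rr_neg k s Hk ltac:(lia)))). simpl; lra.
  - apply (famU2 _ _ _ _ _ 0); auto. lia. apply (cc_to_opp _ _ _ _ _ _ (cc_pos k true s t _ _ (wF k s t 0 Hk ltac:(lia)) (rr_pos k s Hk Hsk ltac:(lia)))). simpl; lra.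
  - apply (famU3 _ _ _ _ _ 0); auto. lia. apply (cc_to_opp _ _ _ _ _ _ (cc_pos k true s t _ _ (wG k s t 0 Hk ltac:(lia)) (rr_pos k t Hk Htk ltac:(lia)))). simpl; lra.
  - apply (famU2 _ _ _ _ _ 0); auto. lia. apply (cc_to_opp _ _ _ _ _ _ (cc_neg k false s t _ _ (wF k s t 0 Hk ltac:(lia)) (rr_neg k s Hk ltac:(lia)))). simpl; lra.
  - apply (famU3 _ _ _ _ _ 0); auto. lia. apply (cc_to_opp _ _ _ _ _ _ (cc_neg k false s t _ _ (wG k s t 0 Hk ltac:(lia)) (rr_neg k t Hk ltac:(lia)))). simpl; lra.
  - apply (famU2 _ _ _ _ _ 1); auto. lia. apply (cc_to_opp _ _ _ _ _ _ (cc_neg k false s t _ _ (wF k s t 1 Hk ltac:(lia)) (rr_neg k s Hk ltac:(lia)))). simpl; lra.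
  - apply (famU3 _ _ _ _ _ 1); auto. lia. apply (cc_to_opp _ _ _ _ _ _ (cc_neg k false s t _ _ (wG k s t 1 Hk ltac:(lia)) (rr_neg k t Hk ltac:(lia)))). simpl; lra.
  - apply (famU2 _ _ _ _ _ 1); auto. lia. apply (cc_to_opp _ _ _ _ _ _ (cc_pos k true s t _ _ (wF k s t 1 Hk ltac:(lia)) (rr_pos k s Hk Hsk ltac:(lia)))). simpl; lra.
  - apply (famU3 _ _ _ _ _ 1); auto. lia. apply (cc_to_opp _ _ _ _ _ _ (cc_pos k true s t _ _ (wG k s t 1 Hk ltac:(lia)) (rr_pos k t Hk Htk ltac:(lia)))). simpl; lra.
Qed.

Theorem lemma4p3 (k : nat) (pm : bool) (s t : nat) :
  (1 <= k)%nat -> (s < k)%nat -> (t < k)%nat ->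
  lam k pm s t <> 3 ->
  ((forall x : vtx, in_P k x -> ufun k pm s t x = RtoC 0) <-> u_list k pm s t) /\
  ((forall x : vtx, in_P k x -> wfun k pm s t x = RtoC 0) <-> w_list k pm s t).
Proof.
  intros Hk Hsk Htk Hl. split; split.
  - intros H. apply onlyU; auto. unfold CU. apply fourier; auto.
    intros a b Ha Hb. rewrite <- expU by auto. apply H. simpl. lia.
  - intros H x _. now apply listU_van.
  - intros H. apply onlyW; auto. unfold CW. apply fourier; auto.
    intros a b Ha Hb. rewrite <- expW by auto. apply H. simpl. lia.
  - intros H x _. unfold w_list in H. destruct H as [H|[H|[H|H]]];
    first [ now apply listU_van | apply famW1; auto; lia | apply famW2; auto; lia | apply famW3; auto; lia ].
Qed.
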